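(* Let $W$ be a finite set and $\mathtt{N}=\{N_1,\ldots,N_r\}$ a sequence of subsets of $W$ with $N_1\cup\cdots\cup N_r=W$, and put $m=|W|+r$. Put $M_i=N_i-(N_1\cup\cdots\cup N_{i-1})$, $\mathtt{M}=\{M_1,\ldots,M_r\}$, and $U=\widetilde{M}_2\cup\cdots\cup\widetilde{M}_r$. If $\widetilde{N}_i\cap\widetilde{N}_j\ne\emptyset$ for all $i,j$, then the inclusion $\mathbb{R}\mathcal{Z}_{K(\mathtt{M})_U}\to\mathbb{R}\mathcal{Z}_{K(\mathtt{N})}^{m-1}$ is null homotopic.
   Context: Choose distinct points $a_1,\ldots,a_r\notin W$, $\widetilde{N}_i=N_i\sqcup\{a_i\}$, $\widetilde{M}_i=M_i\sqcup\{a_i\}$, $V=W\sqcup\{a_1,\ldots,a_r\}$ (so $|V|=m$). $K(\mathtt{N})$ (resp. $K(\mathtt{M})$) is the simplicial complex on $V$ whose minimal non-faces are exactly $\widetilde{N}_1,\ldots,\widetilde{N}_r$ (resp. $\widetilde{M}_1,\ldots,\widetilde{M}_r$); since $M_i\subset N_i$, $K(\mathtt{M})\subset K(\mathtt{N})$. $K(\mathtt{M})_U=\{\sigma\in K(\mathtt{M})\mid\sigma\subset U\}$ on vertex set $U$. For a complex $K$ on vertex set $V$, $\mathbb{R}\mathcal{Z}_K=\bigcup_{\sigma\in K}\prod_{v\in V}Y_v$ with $Y_v=CS^0$ (reduced cone, an interval) if $v\in\sigma$ and $Y_v=S^0$ otherwise; its fat wedge filtration is $\mathbb{R}\mathcal{Z}_K^i=\{(x_v)\in\mathbb{R}\mathcal{Z}_K\mid\text{at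 least }|V|-i\text{ coordinates are the basepoint}\}$. The inclusion $\mathbb{R}\mathcal{Z}_{K(\mathtt{M})_U}\to\mathbb{R}\mathcal{Z}_{K(\mathtt{N})}^{m-1}$ puts the basepoint in every coordinate outside $U$. *)

(* Defs.v *)
From HB Require Import structures.
From mathcomp Require Import all_boot all_order all_algebra.
From mathcomp Require Import all_classical all_reals all_analysis.
Set Implicit Arguments. Unset Strict Implicit. Unset Printing Implicit Defensive.
Import Order.TTheory GRing.Theory Num.Theory.
Import numFieldNormedType.Exports.
Local Open Scope classical_set_scope.
Local Open Scope ring_scope.

(* Vertex set V = W ⊔ {a_1,...,a_r}; a_i is [inr i]. *)
Definition Vtx (W : finType) (r : nat) : finType := (W + 'I_r)%type.

(* M_i = N_i - (N_1 ∪ ... ∪ N_{i-1})  (indices are 0-based here) *)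
Definition Mseq (W : finType) (r : nat) (N : 'I_r -> {set W}) (i : 'I_r)
  : {set W} := N i :\: \bigcup_(j < r | (j < i)%N) N j.

Definition tld (W : finType) (r : nat) (S : {set W}) (i : 'I_r) : {set Vtx W r} :=
  inr i |: [set inl w | w in S].

(* K(F): simplicial complex on V whose minimal non-faces are F~_1,...,F~_r,
   i.e. sigma is a face iff it contains none of the F~_i
   (the F~_i are pairwise incomparable since a_i lies only in F~_i). *)
Definition Kface (W : finType) (r : nat) (F : 'I_r -> {set W})
  (sigma : {set Vtx W r}) : bool := [forall i, ~~ (tld (F i) i \subset sigma)].

Definition Uset (W : finType) (r : nat) (N : 'I_r -> {set W}) : {set Vtx W r} :=
  \bigcup_(i < r | (0 < i)%N) tld (Mseq N i) i.

Definition Usub (W : finType) (r : nat) (N : 'I_r -> {set W}) : finType :=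
  {v : Vtx W r | v \in Uset N}.

Definition KMU_face (W : finType) (r : nat) (N : 'I_r -> {set W})
  (tau : {set Usub N}) : bool := Kface (Mseq N) [set val u | u in tau].

(* Real moment-angle complex RZ_K ⊂ ∏_{v∈D} Y_v ⊂ R^D (product topology), with the model
   CS^0 = [0,1], S^0 = {0,1} ⊂ CS^0, basepoint 0. *)
Definition RZ (R : realType) (D : finType) (face : {set D} -> bool)
  : set {ptws D -> R} :=
  [set x : {ptws D -> R} | exists sigma : {set D}, face sigma /\
     forall v : D, if v \in sigma then 0 <= x v <= 1 else (x v == 0) || (x v == 1)].

(* fat wedge filtration: RZ_K^i = points with at least |D| - i coordinates
   equal to the basepoint 0 *)
Definition RZfat (R : realType) (D : finType) (face : {set D} -> bool) (i : nat)
  : set {ptws D -> R} :=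
  [set x : {ptws D -> R} | RZ face x /\ (#|D| - i <= #|[set v : D | x v == 0%R]%SET|)%N].

Definition inclU (R : realType) (W : finType) (r : nat) (N : 'I_r -> {set W})
  (x : {ptws Usub N -> R}) : {ptws Vtx W r -> R} :=
  fun v => match insub v with Some u => x u | None => 0 end.

Definition null_homotopic (R : realType) (X Y : topologicalType)
  (A : set X) (B : set Y) (f : X -> Y) : Prop :=
  exists (c : Y) (H : R * X -> Y),
    [/\ B c,
        {within [set p : R * X | 0 <= p.1 <= 1 /\ A p.2], continuous H},
        forall x, A x -> H (0, x) = f x /\ H (1, x) = c
      & forall t x, 0 <= t <= 1 -> A x -> B (H (t, x))].

(* Main.v *)
Require Import Defs.
From HB Require Import structures.
From mathcomp Require Import all_boot all_order all_algebra.
From mathcomp Require Import all_classical all_reals all_analysis.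
From mathcomp Require Import lra zify.
Import Order.TTheory GRing.Theory Num.Theory.
Import numFieldNormedType.Exports.
Local Open Scope classical_set_scope.
Local Open Scope ring_scope.

Lemma ptws_cont (R : realType) (X : topologicalType) (D : Type)
  (H : X -> {ptws D -> R}) :
  (forall v, continuous (fun x => H x v)) -> continuous H.
Proof.
move=> hc p; apply/cvg_sup => v.
move=> U [? [[W0 oW <-]]] /= Wsfz /filterS; apply.
apply: (hc v p).
exact: open_nbhs_nbhs.
Qed.

Lemma comp_cont (R : realType) (D : eqType) (u : D) :
  continuous (fun q : R * {ptws D -> R} => (1 - q.1) * q.2 u).
Proof.
move=> q.
have h1 : (fun q : R * {ptws D -> R} => q.1) @ q --> q.1.
  exact: cvg_fst.
have h2 : (fun q : R * {ptws D -> R} => q.2 u) @ q --> q.2 u.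
  have hs : (fun q : R * {ptws D -> R} => q.2) @ q --> q.2 by exact: cvg_snd.
  have hp := (@proj_continuous D (fun _ => R) u q.2).
  exact: (cvg_comp _ _ hs hp).
have h3 : (fun q : R * {ptws D -> R} => 1 - q.1) @ q --> 1 - q.1.
  exact: (cvgB (cvg_cst (1:R)) h1).
exact: (cvgM h3 h2).
Qed.

Lemma mem_tld_inl (W : finType) (r : nat) (S : {set W}) (i : 'I_r) w :
  (inl w \in tld S i) = (w \in S).
Proof.
rewrite /tld in_setU1 /=.
apply/idP/idP => [/imsetP [w' ws [->]]|ws] //; exact: imset_f.
Qed.

Lemma mem_tld_inr (W : finType) (r : nat) (S : {set W}) (i k : 'I_r) :
  (inr k \in tld S i) = (k == i).
Proof.
rewrite /tld in_setU1.
have -> : ((inr k : Vtx W r) == inr i) = (k == i) by [].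
have -> : (inr k \in [set (inl w : Vtx W r) | w in S]%SET) = false.
  by apply/negP => /imsetP [w _ []].
by rewrite orbF.
Qed.

Lemma inr_notin_U (W : finType) (r : nat) (N : 'I_r -> {set W}) (i : 'I_r) :
  (val i = 0)%N -> inr i \notin Uset N.
Proof.
move=> i0; apply/negP => /finset.bigcupP [k kpos].
rewrite mem_tld_inr => /eqP ik; move: kpos; by rewrite -ik i0.
Qed.

Lemma face_U (W : finType) (r : nat) (N : 'I_r -> {set W})
  (Hint : forall i j : 'I_r, tld (N i) i :&: tld (N j) j != finset.set0)
  (sigma : {set Vtx W r}) :
  sigma \subset Uset N -> Kface N sigma.
Proof.
move=> /fintype.subsetP sU; apply/forallP => i; apply/negP => /fintype.subsetP sub.
have [i0|ipos] := posnP i.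
  have := @inr_notin_U _ _ N i i0; rewrite sU //; apply: sub.
  by rewrite mem_tld_inr.
pose j := Ordinal (ltn_trans ipos (ltn_ord i)).
have /finset.set0Pn [z] := Hint j i; rewrite inE => /andP [zj zi].
case: z zj zi => [w|k].
  rewrite !mem_tld_inl => wj wi.
  have /finset.bigcupP [k kpos] : inl w \in Uset N by apply: sU; apply: sub; rewrite mem_tld_inl.
  rewrite mem_tld_inl /Mseq inE => /andP [/finset.bigcupP []]; exists j => //.
rewrite !mem_tld_inr => /eqP -> /eqP ji.
move/(congr1 val): ji => /= ji; have := ipos; by rewrite -ji.
Qed.

Theorem proposition4p5 (R : realType) (W : finType) (r : nat)
  (N : 'I_r -> {set W})
  (Hcover : (\bigcup_(i < r) N i)%SET = [set: W]%SET)
  (Hint : forall i j : 'I_r, tld (N i) i :&: tld (N j) j != finset.set0) :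
  @null_homotopic R {ptws Usub N -> R} {ptws Vtx W r -> R} (@RZ R (Usub N) (@KMU_face W r N))
                   (RZfat (@Kface W r N) (#|W| + r).-1)
                   (@inclU R W r N).
Proof.
pose H : R * {ptws Usub N -> R} -> {ptws Vtx W r -> R} :=
  fun p v => (1 - p.1) * (if insub v is Some u then p.2 u else 0).
have cardV : #|Vtx W r| = (#|W| + r)%N by rewrite card_sum card_ord.
exists (fun _ => 0 : R), H; split.
- split.
    exists finset.set0; split.
      apply/forallP => i; apply/negP => /fintype.subsetP /(_ (inr i)).
      by rewrite mem_tld_inr eqxx finset.in_set0 => /(_ isT).
    by move=> v; rewrite finset.in_set0 eqxx.
  apply: leq_trans (leq_subr _ _) _.
  by apply: subset_leq_card; apply/fintype.subsetP => v _; rewrite inE.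
- apply: continuous_subspaceT; apply: ptws_cont => v.
  rewrite /H; case: (insub v) => [u|] /=; first exact: comp_cont.
  have -> : (fun x : R * {ptws Usub N -> R} => (1 - x.1) * 0) = fun=> 0.
    by apply/funext => q; rewrite mulr0.
  exact: cst_continuous.
- move=> x _; split; apply/funext => v; rewrite /H /inclU /=.
    by rewrite subr0 mul1r.
  by rewrite subrr mul0r.
- move=> t x /andP [t0 t1] [tau [ftau hx]]; split.
    exists (Uset N); split; first exact: (@face_U _ _ N Hint).
    move=> v; case: ifP => vU.
      rewrite /H; case: insubP => [u _ _|_] /=; last by rewrite mulr0 lexx ler01.
      have : 0 <= x u <= 1.
        move: (hx u); case: ifP => // _ /orP [] /eqP ->; by rewrite ?lexx ?ler01.
      move=> /andP [x0 x1]; apply/andP; split; nra.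
    by rewrite /H insubF //= mulr0 eqxx.
  rewrite cardV.
  have [r0|rpos] := posnP r.
    have -> : #|W| = 0%N.
      apply: eq_card0 => w; exfalso.
      have : w \in [set: W]%SET by rewrite finset.in_setT.
      rewrite -Hcover => /finset.bigcupP [i _ _]; have := ltn_ord i; by rewrite {2}r0 ltn0.
    lia.
  pose j := Ordinal rpos.
  have : inr j \in [set v | H (t, x) v == 0]%SET.
    by rewrite inE /H insubF ?mulr0 //; apply/negbTE; exact: (@inr_notin_U _ _ N j).
  move=> hj; have : (0 < #|[set v | H (t, x) v == 0%R]%SET|)%N.
    by apply/card_gt0P; exists (inr j).
  lia.
Qed.
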